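(* For every profile $P$: $|\mathit{TC}(P)|=2$ if and only if all but two agents have distinct top choices (there are distinct agents $x,y$ with the same top choice $p$, and the top choices of the agents in $N\setminus\{y\}$ are pairwise distinct) and these two agents $x,y$ also share the same second-best house $q$, which is not top-ranked by any agent. Analogously, $|\mathit{BC}(P)|=2$ if and only if all but two agents have distinct bottom choices (there are distinct agents $x,y$ with the same last-ranked house $p$, and the last-ranked houses of the agents in $N\setminus\{y\}$ are pairwise distinct) and these two agents share the same second-worst house $q$, which is not bottom-ranked by any agent.
   Context: Let $N=\{1,\dots,n\}$ be agents and $H$ a set of $n$ houses. A profile $P=(\succ_1,\dots,\succ_n)$ gives each agent a strict linear order on $H$; an agent's top (bottom) choice is the house she ranks first (last). An assignment is a bijection $N\to H$; $M$ is the set of assignments. Agent $x$ weakly prefers $\mu$ to $\lambda$ if $\mu(x)\succ_x\lambda(x)$ or $\mu(x)=\lambda(x)$. $N_{\mu,\lambda}$ is the set of agents weakly preferring $\mu$ to $\lambda$; $\mu\succsim\lambda$ if $|N_{\mu,\lambda}|\ge|N_{\lambda,\mu}|$, and $\succsim^*$ is its transitive closure. $\mathit{TC}(P)=\{\mu\in M:\mu\succsim^*\lambda\ \forall\lambda\in M\}$, $\mathit{BC}(P)=\{\mu\in M:\lambda\succsim^*\mu\ \forall\lambda\in M\}$. *)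

(* Defs.v *)
From mathcomp Require Import all_boot all_order.
Set Implicit Arguments. Unset Strict Implicit. Unset Printing Implicit Defensive.

(* Agents are 'I_n; houses form a finite type H with #|H| = n.
   A profile P assigns to each agent x a relation P x on H, where
   P x a b means  a ≻_x b. *)

Section Defs.
Variables (n : nat) (H : finType).

Definition strict_linear_order (r : rel H) : Prop :=
  [/\ irreflexive r, transitive r & forall a b, a != b -> r a b || r b a].

Definition profile := 'I_n -> rel H.

Definition is_profile (P : profile) : Prop :=
  forall x, strict_linear_order (P x).

Definition top_choice (P : profile) (x : 'I_n) (p : H) : Prop :=
  forall h, h != p -> P x p h.

Definition bottom_choice (P : profile) (x : 'I_n) (p : H) : Prop :=
  forall h, h != p -> P x h p.

Definition second_best (P : profile) (x : 'I_n) (q : H) : Prop :=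
  exists p, [/\ top_choice P x p, q != p &
                forall h, h != p -> h != q -> P x q h].

Definition second_worst (P : profile) (x : 'I_n) (q : H) : Prop :=
  exists p, [/\ bottom_choice P x p, q != p &
                forall h, h != p -> h != q -> P x h q].

(* assignments: bijections N -> H (with #|H| = n, injective = bijective) *)
Definition is_assignment (mu : {ffun 'I_n -> H}) : bool :=
  injectiveb mu && (#|H| == n).

Definition weakly_prefers (P : profile) (x : 'I_n) (mu lam : {ffun 'I_n -> H}) : bool :=
  P x (mu x) (lam x) || (mu x == lam x).

Definition N_of (P : profile) (mu lam : {ffun 'I_n -> H}) : {set 'I_n} :=
  [set x | weakly_prefers P x mu lam].

Definition majority (P : profile) : rel {ffun 'I_n -> H} :=
  fun mu lam => [&& is_assignment mu, is_assignment lam &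
                    #|N_of P lam mu| <= #|N_of P mu lam|].

(* transitive closure of ≿ on M *)
Definition majority_tc (P : profile) (mu lam : {ffun 'I_n -> H}) : bool :=
  [exists nu, majority P mu nu && connect (majority P) nu lam].

Definition TC (P : profile) : {set {ffun 'I_n -> H}} :=
  [set mu | is_assignment mu &&
     [forall lam, is_assignment lam ==> majority_tc P mu lam]].

Definition BC (P : profile) : {set {ffun 'I_n -> H}} :=
  [set mu | is_assignment mu &&
     [forall lam, is_assignment lam ==> majority_tc P lam mu]].

End Defs.

(* Main.v *)
Require Import Defs.
From mathcomp Require Import all_boot all_order.
Set Implicit Arguments. Unset Strict Implicit. Unset Printing Implicit Defensive.

Section Gen.
Variable (T : finType) (r : rel T).
Hypothesis hr : strict_linear_order r.

Lemma slo_irr a : r a a = false.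
Proof. by case: hr => i _ _; apply: i. Qed.

Lemma slo_asym a b : r a b -> r b a = false.
Proof.
case: hr => i t _ hab; apply/negbTE/negP => hba.
by have := t _ _ _ hab hba; rewrite i.
Qed.

Lemma slo_tr a b c : r a b -> r b c -> r a c.
Proof. by case: hr => _ t _; apply: t. Qed.

Lemma slo_tot a b : a != b -> r a b || r b a.
Proof. by case: hr => _ _ t; apply: t. Qed.

Lemma slo_tot' a b : ~~ r b a -> (a == b) || r a b.
Proof.
move=> nba; case: eqP => //= /eqP ab.
by have := slo_tot ab; rewrite (negbTE nba) orbF.
Qed.

Lemma top_exists (h0 : T) : exists p, forall h, h != p -> r p h.
Proof.
pose F := fun p => #|[set h | r p h]|.
case: (@arg_maxnP T h0 xpredT F erefl) => p _ Hp.
exists p => h hp; apply/negPn/negP => nph.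
have hph : r h p by have := slo_tot hp; rewrite (negbTE nph) orbF.
have : F h <= F p by apply: Hp.
rewrite /F (cardsD1 p [set h0 | r h h0]) inE hph add1n => H1.
suff H2 : #|[set h0 | r p h0]| <= #|[set h0 | r h h0] :\ p|.
  by have := leq_trans H1 H2; rewrite ltnn.
apply: subset_leq_card; apply/subsetP => z; rewrite !inE => hz.
rewrite (slo_tr hph hz) andbT; apply/eqP => ezp.
by rewrite ezp slo_irr in hz.
Qed.
End Gen.

Section Abs.
Variables (U : finType) (R : rel U) (A : pred U).
Hypothesis RA : forall a b, R a b -> A a && A b.
Hypothesis Rrefl : forall a, A a -> R a a.
Hypothesis Rtot : forall a b, A a -> A b -> R a b || R b a.

Definition tcR a b := [exists nu, R a nu && connect R nu b].
Definition TopC := [set mu | A mu && [forall lam, A lam ==> tcR mu lam]].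

Lemma tcR_conn a b : A a -> tcR a b = connect R a b.
Proof.
move=> Aa; apply/existsP/idP => [[nu /andP[Ranu cnu]]|cab].
  exact: connect_trans (connect1 Ranu) cnu.
by exists a; rewrite Rrefl.
Qed.

Lemma back_closed (S : pred U) :
  (forall a b, R a b -> S b -> S a) -> forall a b, connect R a b -> S b -> S a.
Proof.
move=> cl a b /connectP[p pth ->] {b}.
elim: p a pth => [|c p IH] a //= /andP[Rac pth] Sl.
exact: cl Rac (IH _ pth Sl).
Qed.

Lemma memTopC z : z \in TopC <-> A z /\ forall l, A l -> connect R z l.
Proof.
rewrite inE; split.
  case/andP=> Az /forallP H; split=> // l Al.
  by rewrite -tcR_conn //; have := H l; rewrite Al.
case=> Az H; rewrite Az; apply/forallP => l; apply/implyP => Al.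
by rewrite tcR_conn // H.
Qed.

Lemma TopC2 : #|TopC| = 2 <-> exists mu lam, [/\ mu != lam, R mu lam, R lam mu &
   forall nu, R nu mu || R nu lam -> (nu == mu) || (nu == lam)].
Proof.
split.
  move/eqP/cards2P => [mu [lam [neq eT]]].
  have inT z : z \in TopC = (z == mu) || (z == lam) by rewrite eT !inE.
  have [Amu Cmu] : A mu /\ forall l, A l -> connect R mu l
    by apply/memTopC; rewrite inT eqxx.
  have [Alam Clam] : A lam /\ forall l, A l -> connect R lam l
    by apply/memTopC; rewrite inT eqxx orbT.
  have back nu : R nu mu || R nu lam -> (nu == mu) || (nu == lam).
    rewrite -inT => /orP[] H; apply/memTopC; (split; first by case/andP: (RA H)).
      by move=> l Al; exact: connect_trans (connect1 H) (Cmu l Al).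
    by move=> l Al; exact: connect_trans (connect1 H) (Clam l Al).
  exists mu, lam; split => //.
    apply/negPn/negP => nR.
    have cl : forall a b, R a b -> pred1 lam b -> pred1 lam a.
      move=> a b Rab /eqP eb; subst b.
      have := back a; rewrite Rab orbT => /(_ isT) /orP[/eqP ea|//].
      by subst a; rewrite Rab in nR.
    have := back_closed cl (Cmu lam Alam) (eqxx _).
    by rewrite /= (negbTE neq).
  apply/negPn/negP => nR.
  have cl : forall a b, R a b -> pred1 mu b -> pred1 mu a.
    move=> a b Rab /eqP eb; subst b.
    have := back a; rewrite Rab /= => /(_ isT) /orP[//|/eqP ea].
    by subst a; rewrite Rab in nR.
  have := back_closed cl (Clam mu Amu) (eqxx _).
  by rewrite /= eq_sym (negbTE neq).
case=> mu [lam [neq Rml Rlm back]].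
have [Amu Alam] : A mu /\ A lam by case/andP: (RA Rml).
apply/eqP/cards2P; exists mu, lam; split => //; apply/setP => z.
have -> : (z \in [set mu; lam]) = (z == mu) || (z == lam) by rewrite !inE.
have H0 w : (w == mu) || (w == lam) -> A w /\ forall l, A l -> connect R w l.
  case/orP=> /eqP -> {w}.
    split=> // l Al; case/orP: (Rtot Amu Al) => H; first exact: connect1.
    have := back l; rewrite H => /(_ isT) /orP[]/eqP ->; first exact: connect0.
    exact: connect1.
  split=> // l Al; case/orP: (Rtot Alam Al) => H; first exact: connect1.
  have := back l; rewrite H orbT => /(_ isT) /orP[]/eqP ->; last exact: connect0.
  exact: connect1.
apply/idP/idP => [/memTopC [Az C]|Hz]; last by apply/memTopC; apply: H0.
have cl : forall a b, R a b -> [pred x | (x == mu) || (x == lam)] b ->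
    [pred x | (x == mu) || (x == lam)] a.
  by move=> a b Rab /orP[]/eqP eb; subst b; apply: back; rewrite Rab ?orbT.
by have := back_closed cl (C mu Amu); rewrite /= eqxx; apply.
Qed.
End Abs.

Definition tsw {T : eqType} (a b z : T) := if z == a then b else if z == b then a else z.
Lemma tswK (T : eqType) (a b : T) : involutive (@tsw T a b).
Proof.
move=> z; rewrite /tsw.
case: (eqVneq z a) => [->|za]; first by case: (eqVneq b a) => [->|ba]; rewrite ?eqxx.
case: (eqVneq z b) => [->|zb]; first by rewrite eqxx.
by rewrite (negbTE za) (negbTE zb).
Qed.

Section Main.
Variables (n : nat) (H : finType) (P : profile n H).
Hypothesis hH : #|H| = n.
Hypothesis hP : is_profile P.

Local Notation A := (@is_assignment n H).
Local Notation R := (majority P).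

Lemma irrP z a : P z a a = false. Proof. exact (slo_irr (hP z) a). Qed.
Lemma asymP z a b : P z a b -> P z b a = false. Proof. exact (slo_asym (hP z) (a:=a) (b:=b)). Qed.
Lemma trP z a b c : P z a b -> P z b c -> P z a c. Proof. exact (slo_tr (hP z) (a:=a) (b:=b) (c:=c)). Qed.
Lemma totP z a b : a != b -> P z a b || P z b a. Proof. exact (slo_tot (hP z) (a:=a) (b:=b)). Qed.
Lemma totP' z a b : ~~ P z b a -> (a == b) || P z a b. Proof. exact (slo_tot' (hP z) (a:=a) (b:=b)). Qed.

Lemma top_uniq z a b : top_choice P z a -> top_choice P z b -> a = b.
Proof.
move=> ta tb; apply/eqP/negP => /negP ab.
have := ta b; rewrite eq_sym ab => /(_ isT) hab.
have := tb a; rewrite ab => /(_ isT); by rewrite asymP.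
Qed.

Lemma A_inj mu : A mu -> injective mu.
Proof. by case/andP => /injectiveP. Qed.

Lemma A_onto mu h : A mu -> exists w, mu w = h.
Proof.
move=> Amu; have : h \in codom mu.
  apply: inj_card_onto; first exact: A_inj.
  by rewrite card_ord hH.
by case/codomP => w ->; exists w.
Qed.

Definition swap (mu : {ffun 'I_n -> H}) a b : {ffun 'I_n -> H} :=
  [ffun z => if z == a then mu b else if z == b then mu a else mu z].

Lemma swapE mu a b z : swap mu a b z = mu (tsw a b z).
Proof. by rewrite ffunE /tsw; case: (z == a) => //; case: (z == b). Qed.

Lemma swap_A mu a b : A mu -> A (swap mu a b).
Proof.
move=> Amu; apply/andP; split; last by rewrite hH.
have mi := A_inj Amu.
apply/injectiveP => u v; rewrite !swapE => /mi.
exact: (can_inj (tswK a b)).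
Qed.

Lemma inN mu nu z : (z \in N_of P mu nu) = P z (mu z) (nu z) || (mu z == nu z).
Proof. by rewrite inE. Qed.

Lemma card_le (B C : {set 'I_n}) y w : y != w -> y \in C -> y \notin B ->
  (forall z, z \in B -> z != w -> z \in C) -> #|B| <= #|C|.
Proof.
move=> yw yC yB sub.
rewrite (cardsD1 y C) yC (cardsD1 w B).
apply: leq_add; first by case: (w \in B).
apply: subset_leq_card; apply/subsetP => z; rewrite !inE => /andP[zw zB].
rewrite sub // andbT; apply/eqP => e; subst; by rewrite zB in yB.
Qed.

Lemma card_lt (B C : {set 'I_n}) y : y \in C -> y \notin B ->
  (forall z, z \in B -> z \in C) -> #|B| < #|C|.
Proof.
move=> yC yB sub; rewrite (cardsD1 y C) yC add1n ltnS.
apply: subset_leq_card; apply/subsetP => z zB; rewrite !inE sub // andbT.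
apply/eqP => e; subst; by rewrite zB in yB.
Qed.

Lemma setT_le (B : {set 'I_n}) : n <= #|B| -> forall z, z \in B.
Proof.
move=> le z; have : B == setT.
  by rewrite eqEcard subsetT cardsT card_ord.
by move/eqP => ->; rewrite inE.
Qed.

Lemma setC1_le (B : {set 'I_n}) x : x \notin B -> n.-1 <= #|B| ->
  forall z, z != x -> z \in B.
Proof.
move=> xB le z zx; have : B == [set~ x].
  rewrite eqEcard cardsC1 card_ord le andbT.
  apply/subsetP => u uB; rewrite !inE; apply/eqP => e; subst; by rewrite uB in xB.
by move/eqP => ->; rewrite !inE.
Qed.

Lemma card_setC1 (x : 'I_n) : #|[set~ x]| = n.-1.
Proof. by rewrite cardsC1 card_ord. Qed.


Section Core.
Variables (mu lam : {ffun 'I_n -> H}).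
Hypotheses (Amu : A mu) (Alam : A lam) (neq : mu != lam)
  (Rml : R mu lam) (Rlm : R lam mu)
  (back : forall nu, R nu mu -> nu = mu \/ nu = lam).

Let mi := A_inj Amu.

Lemma sb1 y h w : P y h (mu y) -> mu w = h -> lam = swap mu y w.
Proof.
move=> Pyh mwh.
have wy : y != w by apply/eqP => e; subst; by rewrite irrP in Pyh.
have Rnu : R (swap mu y w) mu.
  rewrite /majority swap_A // Amu /=.
  apply: (card_le wy).
  - by rewrite inN swapE /tsw eqxx mwh Pyh.
  - rewrite inN swapE /tsw eqxx mwh (asymP Pyh) /=.
    by apply/eqP => e; rewrite e irrP in Pyh.
  - move=> z; rewrite !inN swapE /tsw => zB zw; rewrite (negbTE zw) in zB *.
    case: (eqVneq z y) => [e|zy]; last by rewrite eqxx orbT.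
    subst z; move: zB; rewrite eqxx mwh (asymP Pyh) /= => /eqP e.
    by rewrite e irrP in Pyh.
case: (back Rnu) => // e.
have := congr1 (fun f : {ffun _ -> _} => f y) e; rewrite swapE /tsw eqxx => /mi e2.
by subst; rewrite eqxx in wy.
Qed.

Lemma sb_exists : exists y h, P y h (mu y).
Proof.
case: (boolP [exists y, [exists h, P y h (mu y)]]).
  by case/existsP => y /existsP[h Ph]; exists y, h.
rewrite negb_exists => /forallP nP.
have nP' z h : P z h (mu z) = false.
  by have := nP z; rewrite negb_exists => /forallP /(_ h) /negbTE.
move: Rlm; rewrite /majority Alam Amu /= => le.
have all1 : forall z, z \in N_of P mu lam.
  by move=> z; rewrite inN orbC; apply: totP'; rewrite nP'.
have : n <= #|N_of P lam mu|.
  apply: leq_trans le; rewrite -[X in X <= _]card_ord.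
  by apply: subset_leq_card; apply/subsetP => z _; rewrite all1.
move/setT_le => all2; case/eqP: neq; apply/ffunP => z.
by have := all2 z; rewrite inN nP' /= => /eqP.
Qed.

Lemma only_if_core : exists y w, [/\ y != w, lam = swap mu y w,
  forall z, z != y -> top_choice P z (mu z), top_choice P y (mu w) &
  second_best P y (mu y)].
Proof.
have [y [h Pyh]] := sb_exists.
have [w mwh] := A_onto h Amu.
have elam := sb1 Pyh mwh.
have wy : y != w by apply/eqP => e; subst; by rewrite irrP in Pyh.
have uniq z h' : P z h' (mu z) -> z = y /\ h' = h.
  move=> Pzh; have [w' mwh'] := A_onto h' Amu.
  have elam' := sb1 Pzh mwh'.
  have := congr1 (fun f : {ffun _ -> _} => f z) elam'.
  rewrite {1}elam !swapE /tsw eqxx.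
  case: (eqVneq z y) => [->|zy].
    by move=> e; split => //; rewrite -mwh -mwh' e.
  case: (eqVneq z w) => [ezw|zw]; last first.
    by move/mi => e; subst; rewrite irrP in Pzh.
  subst z; move/mi => e; subst w'.
  exfalso; move: Rml; rewrite /majority Amu Alam /=.
  apply/negP; rewrite -ltnNge.
  apply: (card_lt (y := y)).
  - by rewrite inN elam swapE /tsw eqxx mwh Pyh.
  - rewrite inN elam swapE /tsw eqxx mwh (asymP Pyh) /=.
    by apply/eqP => e; rewrite e irrP in Pyh.
  - move=> z _; rewrite inN elam swapE /tsw.
    case: (eqVneq z y) => [->|zy']; first by rewrite mwh Pyh.
    case: (eqVneq z w) => [->|zw']; first by rewrite mwh' Pzh.
    by rewrite eqxx orbT.
have topz z : z != y -> top_choice P z (mu z).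
  move=> zy h' hne; have := totP z hne; case/orP => // Ph.
  by case: (uniq _ _ Ph) => e; rewrite e eqxx in zy.
exists y, w; split => //.
- rewrite mwh => h' hne.
  case: (eqVneq h' (mu y)) => [->//|hy].
  have := totP y hne; case/orP => // Ph.
  by case: (uniq _ _ (trP Ph Pyh)) => _ e; rewrite e eqxx in hne.
- exists (mu w); split.
  + rewrite mwh => h' hne.
    case: (eqVneq h' (mu y)) => [->//|hy].
    have := totP y hne; case/orP => // Ph.
    by case: (uniq _ _ (trP Ph Pyh)) => _ e; rewrite e eqxx in hne.
  + by apply/eqP => /mi e; subst; rewrite eqxx in wy.
  + move=> h' hne hy; have := totP y (hy : h' != mu y); rewrite orbC.
    case/orP => // Ph; case: (uniq _ _ Ph) => _ e.
    by rewrite e -mwh eqxx in hne.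
Qed.
End Core.


Section Beats.
Variables (mu : {ffun 'I_n -> H}) (y x : 'I_n).
Hypotheses (Amu : A mu) (yx : y != x)
  (topz : forall z, z != y -> top_choice P z (mu z))
  (topy : top_choice P y (mu x)) (sby : second_best P y (mu y)).

Let mi := A_inj Amu.
Let mxy : mu x != mu y.
Proof. by apply/eqP => /mi e; move: yx; rewrite e eqxx. Qed.
Let Pxy : P x (mu x) (mu y).
Proof. have yx' : x != y by rewrite eq_sym.
have myx : mu y != mu x by rewrite eq_sym mxy.
exact: (topz yx' myx). Qed.
Let Pyx : P y (mu x) (mu y).
Proof. by apply: topy; rewrite eq_sym. Qed.
Let sb h : h != mu x -> h != mu y -> P y (mu y) h.
Proof.
case: sby => p' [tp' _ H']; have e := top_uniq tp' topy; subst p'.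
exact: H'.
Qed.

Lemma N1 : N_of P mu (swap mu y x) = [set~ y].
Proof.
apply/setP => z; rewrite inN in_setC1 swapE /tsw.
case: (eqVneq z y) => [->|zy]; first by rewrite (asymP Pyx) eq_sym (negbTE mxy).
case: (eqVneq z x) => [->|zx]; first by rewrite Pxy.
by rewrite eqxx orbT.
Qed.

Lemma N2 : N_of P (swap mu y x) mu = [set~ x].
Proof.
apply/setP => z; rewrite inN in_setC1 swapE /tsw.
case: (eqVneq z y) => [->|zy]; first by rewrite Pyx yx.
case: (eqVneq z x) => [->|zx]; first by rewrite (asymP Pxy) (eq_sym (mu y)) (negbTE mxy).
by rewrite eqxx orbT.
Qed.

Lemma tieA : R mu (swap mu y x) && R (swap mu y x) mu.
Proof.
by rewrite /majority Amu swap_A // N1 N2 !card_setC1 leqnn.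
Qed.

Lemma beats nu : R nu mu -> nu = mu \/ nu = swap mu y x.
Proof.
rewrite /majority Amu /= => /andP[Anu le].
have nst z : z != y -> P z (nu z) (mu z) = false.
  move=> zy; case: (eqVneq (nu z) (mu z)) => [->|ne]; first exact: irrP.
  exact: (asymP (topz zy ne)).
case: (boolP (P y (nu y) (mu y))) => Py; last first.
  left; have all1 z : z \in N_of P mu nu.
    rewrite inN orbC; apply: totP'.
    by case: (eqVneq z y) => [->//|zy]; rewrite nst.
  have : n <= #|N_of P nu mu|.
    apply: leq_trans le; rewrite -[X in X <= _]card_ord.
    by apply: subset_leq_card; apply/subsetP => z _; rewrite all1.
  move/setT_le => all2; apply/ffunP => z.
  have := all2 z; rewrite inN.
  by case: (eqVneq z y) => [->|zy]; [rewrite (negbTE Py) | rewrite nst] => // /eqP.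
right.
have nuy : nu y = mu x.
  apply/eqP/negPn/negP => ne.
  have ne2 : nu y != mu y by apply/eqP => e; rewrite e irrP in Py.
  by have := sb ne ne2; rewrite (asymP Py).
have ni := A_inj Anu.
have xN : x \notin N_of P nu mu.
  rewrite inN nst 1?eq_sym //= -nuy; apply/eqP => /ni e.
  by move: yx; rewrite e eqxx.
have le2 : n.-1 <= #|N_of P nu mu|.
  apply: leq_trans le; rewrite -(card_setC1 y).
  apply: subset_leq_card; apply/subsetP => z; rewrite in_setC1 => zy.
  rewrite inN; case: (eqVneq (mu z) (nu z)) => [->|ne]; rewrite ?eqxx ?orbT //.
  by rewrite orbF; apply: (topz zy); rewrite eq_sym.
have eqz z : z != x -> z != y -> nu z = mu z.
  move=> zx zy; have := setC1_le xN le2 zx; by rewrite inN nst //= => /eqP.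
have nux : nu x = mu y.
  have [v mv] := A_onto (nu x) Amu.
  case: (eqVneq v y) => [e|vy]; first by rewrite -mv e.
  case: (eqVneq v x) => [e|vx].
    by subst v; move: mv; rewrite -nuy => /ni e; move: yx; rewrite e eqxx.
  by move: mv; rewrite -(eqz v vx vy) => /ni e; rewrite e eqxx in vx.
apply/ffunP => z; rewrite swapE /tsw.
case: (eqVneq z y) => [->//|zy]; case: (eqVneq z x) => [->//|zx].
exact: eqz.
Qed.
End Beats.


Lemma swapK mu a b : a != b -> swap (swap mu a b) b a = mu.
Proof.
move=> ab; apply/ffunP => z; rewrite !swapE /tsw.
case: (eqVneq z b) => [->|zb]; first by rewrite eqxx.
case: (eqVneq z a) => [->|za]; first by rewrite eq_sym (negbTE ab) eqxx.
by rewrite (negbTE za) (negbTE zb).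
Qed.

Definition RHS_top :=
  exists (x y : 'I_n) (p q : H),
       [/\ x != y, top_choice P x p, top_choice P y p &
           (forall (a b : 'I_n) (h : H), a != y -> b != y -> a != b ->
              top_choice P a h -> ~ top_choice P b h)] /\
       [/\ second_best P x q, second_best P y q &
           forall z : 'I_n, ~ top_choice P z q].

Lemma TC2 : #|TC P| = 2 <-> RHS_top.
Proof.
have -> : TC P = TopC R A by [].
have RA' : forall a b, R a b -> A a && A b.
  by move=> a b; rewrite /majority; case/and3P => -> -> _.
have Rr' : forall a, A a -> R a a by move=> a Aa; rewrite /majority Aa leqnn.
have Rt' : forall a b, A a -> A b -> R a b || R b a.
  move=> a b Aa Ab; rewrite /majority Aa Ab /=; exact: leq_total.
apply: (iff_trans (TopC2 RA' Rr' Rt')).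
split.
  case=> mu [lam [neq Rml Rlm back]].
  have /andP[Amu Alam] : A mu && A lam by move: Rml; rewrite /majority; case/and3P => -> ->.
  have backm nu : R nu mu -> nu = mu \/ nu = lam.
    by move=> Rn; have := back nu; rewrite Rn => /(_ isT) /orP[]/eqP; [left|right].
  have backl nu : R nu lam -> nu = lam \/ nu = mu.
    by move=> Rn; have := back nu; rewrite Rn orbT => /(_ isT) /orP[]/eqP; [right|left].
  have neq' : lam != mu by rewrite eq_sym.
  have [y [w [wy elam topz topy sby]]] := only_if_core Amu Alam neq Rml Rlm backm.
  have [y' [w' [wy' emu topz' topy' sby']]] := only_if_core Alam Amu neq' Rlm Rml backl.
  have mi := A_inj Amu.
  have wy2 : w != y by rewrite eq_sym.
  have lw : lam w = mu y by rewrite elam swapE /tsw (negbTE wy2) eqxx.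
  have ew : w = y'.
    apply/eqP/negPn/negP => ne.
    have := top_uniq (topz' w ne) (topz w wy2); rewrite lw => /mi e.
    by move: wy; rewrite e eqxx.
  subst y'; rewrite lw in sby'.
  exists w, y, (mu w), (mu y); split; split => //.
  - exact: topz.
  - move=> a b h ay bY ab ta tb.
    have e1 := top_uniq ta (topz a ay); have e2 := top_uniq tb (topz b bY).
    by move: ab; rewrite e1 in e2; move/mi: e2 => ->; rewrite eqxx.
  - move=> z tz; case: (eqVneq z y) => [e|zy].
      subst z; have := top_uniq tz topy => /mi e.
      by move: wy; rewrite e eqxx.
    have := top_uniq tz (topz z zy) => /mi e.
    by move: zy; rewrite e eqxx.
case=> x [y [p [q [[xy tx ty dist] [sbx sby nq]]]]].
pose tf z := odflt p [pick h | [forall h', (h' != h) ==> P z h h']].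
have tfP z : top_choice P z (tf z).
  rewrite /tf; case: pickP => [h /forallP Hh | none] /=.
    by move=> h' hne; have := Hh h'; rewrite hne.
  exfalso; have [h Hh] := top_exists (hP z) p.
  have := none h; move/negbT/negP; apply; apply/forallP => h'.
  by apply/implyP => hne; apply: Hh.
pose mu : {ffun 'I_n -> H} := [ffun z => if z == y then q else tf z].
have Amu : A mu.
  apply/andP; split; last by rewrite hH.
  apply/injectiveP => u v; rewrite !ffunE.
  case: (eqVneq u y) => [->|uy]; case: (eqVneq v y) => [->|vy] //.
  - by move=> e; exfalso; apply: (nq v); rewrite e; apply: tfP.
  - by move=> e; exfalso; apply: (nq u); rewrite -e; apply: tfP.
  - move=> e; case: (eqVneq u v) => // uv; exfalso.
    have tv : top_choice P v (tf u) by rewrite e; apply: tfP.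
    exact: (dist u v (tf u) uy vy uv (tfP u) tv).
have mi := A_inj Amu.
have yx : y != x by rewrite eq_sym.
have topz z : z != y -> top_choice P z (mu z).
  by move=> zy; rewrite ffunE (negbTE zy); apply: tfP.
have mux : mu x = p by rewrite ffunE (negbTE xy); apply: top_uniq (tfP x) tx.
have topy : top_choice P y (mu x) by rewrite mux.
have sbymu : second_best P y (mu y) by rewrite ffunE eqxx.
pose lam := swap mu y x.
have /andP[Rml Rlm] := tieA Amu yx topz topy.
have Alam : A lam by apply: swap_A.
have topz' z : z != x -> top_choice P z (lam z).
  move=> zx; rewrite swapE /tsw (negbTE zx).
  case: (eqVneq z y) => [->//|zy]; exact: topz.
have topx' : top_choice P x (lam y) by rewrite swapE /tsw eqxx; apply: topz.
have sbx' : second_best P x (lam x).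
  by rewrite swapE /tsw (negbTE xy) eqxx ffunE eqxx.
have lamK : swap lam x y = mu by apply: swapK.
exists mu, lam; split => //.
  apply/eqP => e; have := congr1 (fun f : {ffun _ -> _} => f y) e.
  rewrite swapE /tsw eqxx => /mi e2; by move: yx; rewrite {1}e2 eqxx.
move=> nu /orP[] Rn.
  by case: (beats Amu yx topz topy sbymu Rn) => ->; rewrite eqxx ?orbT.
case: (beats Alam xy topz' topx' sbx' Rn) => ->; rewrite ?lamK eqxx ?orbT //.
Qed.

End Main.

Theorem lemmaB3 (n : nat) (H : finType) (P : profile n H) :
  #|H| = n -> is_profile P ->
  (#|TC P| = 2 <->
     exists (x y : 'I_n) (p q : H),
       [/\ x != y, top_choice P x p, top_choice P y p &
           (forall (a b : 'I_n) (h : H), a != y -> b != y -> a != b ->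
              top_choice P a h -> ~ top_choice P b h)] /\
       [/\ second_best P x q, second_best P y q &
           forall z : 'I_n, ~ top_choice P z q]) /\
  (#|BC P| = 2 <->
     exists (x y : 'I_n) (p q : H),
       [/\ x != y, bottom_choice P x p, bottom_choice P y p &
           (forall (a b : 'I_n) (h : H), a != y -> b != y -> a != b ->
              bottom_choice P a h -> ~ bottom_choice P b h)] /\
       [/\ second_worst P x q, second_worst P y q &
           forall z : 'I_n, ~ bottom_choice P z q]).
Proof.
move=> hH hP; split; first exact: (TC2 hH hP).
pose Pr : profile n H := fun x a b => P x b a.
have hPr : is_profile Pr.
  move=> x; case: (hP x) => i t tot; split.
  - by move=> a; apply: i.
  - by move=> y1 x1 z1 h1 h2; exact: t h2 h1.
  - by move=> a b ab; rewrite orbC; apply: tot.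
have Rr (Q : profile n H) a : is_assignment a -> majority Q a a.
  by move=> Aa; rewrite /majority Aa leqnn.
have -> : BC P = TC Pr.
  apply/setP => mu; rewrite !inE; case Amu: (is_assignment mu) => //=.
  apply: eq_forallb => lam; case Al: (is_assignment lam) => //=.
  change (tcR (majority P) lam mu = tcR (majority Pr) mu lam).
  rewrite (@tcR_conn _ _ (@is_assignment n H) (@Rr P)) // (@tcR_conn _ _ (@is_assignment n H) (@Rr Pr)) //.
  have eR : majority Pr =2 [rel a b | majority P b a].
    have E1 c d : N_of Pr d c = N_of P c d.
      by apply/setP => z; rewrite !inE /weakly_prefers eq_sym.
    by move=> a b /=; rewrite /majority andbCA !E1.
  by rewrite (eq_connect eR) connect_rev.
exact: (TC2 hH hPr).
Qed.
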